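(* Let $X$ be a subspace of $\beta\omega$ with $\omega\subseteq X$. If $\operatorname{CL}(X)$ is pseudocompact, then $X^\kappa$ is pseudocompact for every cardinal $\kappa$.
   Context: $\beta\omega$ is the Stone–Čech compactification of the discrete space $\omega$. Powers carry the product topology. $\operatorname{CL}(X)$ is the set of nonempty closed subsets of $X$ with the Vietoris topology; pseudocompact means every continuous real-valued function is bounded. *)

(* Defs.v *)
From HB Require Import structures.
From mathcomp Require Import all_boot all_order all_algebra.
From mathcomp Require Import all_classical all_reals all_analysis.
From mathcomp Require Import Rstruct Rstruct_topology.
Set Implicit Arguments. Unset Strict Implicit. Unset Printing Implicit Defensive.
Import Order.TTheory GRing.Theory Num.Theory.
Local Open Scope classical_set_scope.
Local Open Scope ring_scope.

(** beta omega: the Stone-Cech compactification of the discrete space omega,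
    realized (as usual) as the space of ultrafilters on nat, with the
    topology generated by the basic clopen sets  A^* = {p | A \in p}. *)
Definition betaomega : Type := {F : set_system nat | UltraFilter F}.
HB.instance Definition _ := gen_eqMixin betaomega.
HB.instance Definition _ := gen_choiceMixin betaomega.

Definition bw_basic (A : set nat) : set betaomega :=
  [set p | (sval p) A].

HB.instance Definition _ := isSubBaseTopological.Build betaomega
  (@setT (set nat)) bw_basic.

(** the point n of omega inside betaomega is the principal ultrafilter at n *)
Definition is_principal_at (p : betaomega) (n : nat) : Prop :=
  forall A : set nat, sval p A <-> A n.

(** CL(X): nonempty closed subsets of X, with the Vietoris topology,
    generated by the subbasic sets <U>^+ = {F | F <= U} and
    <U>^- = {F | F meets U}, for U open in X. *)
Definition CL (X : topologicalType) : Type :=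
  {F : set X | closed F /\ F !=set0}.
HB.instance Definition _ (X : topologicalType) := gen_eqMixin (CL X).
HB.instance Definition _ (X : topologicalType) := gen_choiceMixin (CL X).

Definition vietoris_subbase (X : topologicalType) (i : bool * set X) : set (CL X) :=
  if i.1 then [set F | sval F `<=` i.2]
  else [set F | sval F `&` i.2 !=set0].

HB.instance Definition _ (X : topologicalType) :=
  isSubBaseTopological.Build (CL X)
    [set i : bool * set X | open i.2] (@vietoris_subbase X).

Definition pseudocompact (T : topologicalType) : Prop :=
  forall f : T -> Rdefinitions.R, continuous f -> exists M : Rdefinitions.R, forall x : T, `|f x| <= M.

Definition power (X : topologicalType) (I : Type) : topologicalType :=
  prod_topology (fun _ : I => X).

(* Main.v *)
Require Import Defs.
From HB Require Import structures.
From mathcomp Require Import all_boot all_order all_algebra.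
From mathcomp Require Import all_classical all_reals all_analysis.
From mathcomp Require Import finmap Rstruct Rstruct_topology lra.
Set Implicit Arguments. Unset Strict Implicit. Unset Printing Implicit Defensive.
Local Open Scope classical_set_scope.

Definition pt (n : nat) : betaomega :=
  exist _ (principal_filter n) (principal_filter_ultra n).

Lemma bw_open (A : set nat) : open (bw_basic A).
Proof.
exists [set bw_basic A].
  move=> _ ->. exact: finI_from1.
by rewrite bigcup_set1.
Qed.

Lemma bw_fin_basic (E : {fset set nat}) (p : betaomega) :
  (\bigcap_(i in [set` E]) bw_basic i) p ->
  exists A, sval p A /\ bw_basic A `<=` \bigcap_(i in [set` E]) bw_basic i.
Proof.
move=> Ei.
exists (\bigcap_(k in [set` E]) k); split.
  have UF : UltraFilter (sval p) := svalP p.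
  apply: filter_bigI => k kE; exact: Ei.
move=> q Aq k kE; have UF : UltraFilter (sval q) := svalP q; apply: filterS Aq; move=> m; exact.
Qed.

Lemma bw_open_basic (O : set betaomega) (p : betaomega) :
  open O -> O p -> exists A, sval p A /\ bw_basic A `<=` O.
Proof.
move=> [D' sD' <-] [i Di Ei].
have [E sE Ee] := sD' _ Di.
rewrite -Ee in Ei.
have [A [pA sA]] := bw_fin_basic Ei.
exists A; split => // q /sA qi; exists i => //.
by rewrite -Ee.
Qed.

Lemma sig_eq (A : Type) (P : A -> Prop) (u v : {a : A | P a}) :
  sval u = sval v -> u = v.
Proof. apply: eq_sig_hprop => x p q; exact: Prop_irrelevance. Qed.

Lemma pt_eq (p : betaomega) (m : nat) : sval p [set m] -> p = pt m.
Proof.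
move=> pm; have UF : UltraFilter (sval p) := svalP p; apply: sig_eq => /=.
apply/funext => B; apply/propext; rewrite principal_filterP; split.
  move=> pB; have pmB : sval p ([set m] `&` B) by apply: filterI.
  have [k [-> //]] := filter_ex pmB.
by move=> Bm; apply: filterS pm => k ->.
Qed.

Section XT.
Variable X : set betaomega.
Hypothesis hw : forall n, X (pt n).
Local Notation XT := (set_type X).

Definition ptX n : XT := exist _ (pt n) (mem_set (hw n)).
Definition OB (A : set nat) : set XT := [set x | sval (sval x) A].

Lemma OB_open A : open (OB A).
Proof. exists (bw_basic A) => //; exact: bw_open. Qed.

Lemma OB_C A : ~` OB A = OB (~` A).
Proof.
apply/seteqP; split => x /=; have UF : UltraFilter (sval (sval x)) := svalP (sval x).
  by case: (in_ultra_setVsetC A UF).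
move=> nA pA; have pAn : sval (sval x) (A `&` ~` A) by apply: filterI.
  rewrite setICr in pAn; exact: filter_not_empty pAn.
Qed.

Lemma OB_closed A : closed (OB A).
Proof. by rewrite -[OB A]setCK OB_C; apply: open_closedC; exact: OB_open. Qed.

Lemma ptX_OB n A : OB A (ptX n) <-> A n.
Proof. exact: principal_filterP. Qed.

Lemma OB1 x m : OB [set m] x -> x = ptX m.
Proof. by move=> /pt_eq e; apply: sig_eq. Qed.

Lemma nbhs_OB (x : XT) (W : set XT) : nbhs x W ->
  exists A, sval (sval x) A /\ OB A `<=` W.
Proof.
move=> [Ob [[B oB <-] Bx sW]].
have [A [xA sA]] := bw_open_basic oB Bx.
by exists A; split => // y yA; apply: sW; apply: sA.
Qed.

Lemma nbhs_ptX (x : XT) (W : set XT) : nbhs x W -> exists m, W (ptX m).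
Proof.
move=> /nbhs_OB [A [xA sA]]; have UF : UltraFilter (sval (sval x)) := svalP (sval x).
have [m Am] := filter_ex xA; exists m; apply: sA; exact/ptX_OB.
Qed.


Lemma VS_open (i : bool * set XT) : open i.2 -> open (@vietoris_subbase XT i).
Proof.
move=> oi; exists [set vietoris_subbase i]; last by rewrite bigcup_set1.
move=> _ ->; exact: finI_from1.
Qed.

Lemma plus_nbhs (A : CL XT) (U : set XT) : open U -> sval A `<=` U ->
  nbhs A [set F : CL XT | sval F `<=` U].
Proof.
move=> oU AU; apply: open_nbhs_nbhs; split => //.
exact: (@VS_open (true, U)).
Qed.

Lemma minus_nbhs (A : CL XT) (U : set XT) : open U -> sval A `&` U !=set0 ->
  nbhs A [set F : CL XT | sval F `&` U !=set0].
Proof.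
move=> oU AU; apply: open_nbhs_nbhs; split => //.
exact: (@VS_open (false, U)).
Qed.

End XT.

Lemma filter_bnd (T : Type) (F : set_system T) (FF : Filter F) (t : nat)
  (P : nat -> set T) : (forall j, (j <= t)%N -> F (P j)) ->
  F [set x | forall j, (j <= t)%N -> P j x].
Proof.
elim: t => [|t IH] H.
  apply: filterS (H 0%N (leqnn 0)) => x Px j; rewrite leqn0 => /eqP ->; exact.
have h1 : F [set x | forall j, (j <= t)%N -> P j x] by apply: IH => j jt; apply: H; exact: leqW.
have h2 := H t.+1 (leqnn _).
have h3 : F ([set x | forall j, (j <= t)%N -> P j x] `&` P t.+1) by apply: filterI.
apply: filterS h3 => x [h4 h5] j; rewrite leq_eqVlt => /orP [/eqP -> //|]; rewrite ltnS; exact: h4.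
Qed.

Lemma filter_list (T I : Type) (F : set_system T) (FF : Filter F) (s : list I)
  (P : I -> set T) : (forall i, List.In i s -> F (P i)) ->
  F [set x | forall i, List.In i s -> P i x].
Proof.
elim: s => [|a s IH] H.
  by apply: filterS filterT => x _ i [].
have h1 := IH (fun i si => H i (or_intror si)).
have h2 := H a (or_introl erefl).
have h3 : F ([set x | forall i, List.In i s -> P i x] `&` P a) by apply: filterI.
apply: filterS h3 => x [h4 h5] i /= [<- //|]; exact: h4.
Qed.

Lemma filter_imp (T : Type) (F : set_system T) (FF : Filter F) (Q : Prop)
  (A : set T) : (Q -> F A) -> F [set x | Q -> A x].
Proof.
case: (pselect Q) => [q /(_ q) FA|nq _]; first by apply: filterS FA => x ? _.
by apply: filterS filterT => x _ /nq.
Qed.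

Lemma ultra_bnd (u : set_system nat) (UF : UltraFilter u) (t : nat)
  (P : nat -> set nat) : u [set m | exists j, (j <= t)%N /\ P j m] ->
  exists j, (j <= t)%N /\ u (P j).
Proof.
elim: t => [|t IH] H.
  exists 0%N; split => //; apply: filterS H => m [j [+ Pj]]; rewrite leqn0 => /eqP <- //.
case: (in_ultra_setVsetC (P t.+1) UF) => [Pt|nPt]; first by exists t.+1.
have [j [jt Pj]] : exists j, (j <= t)%N /\ u (P j).
  apply: IH; have h : u ([set m | exists j, (j <= t.+1)%N /\ P j m] `&` ~` P t.+1) by apply: filterI.
  apply: filterS h => m [[j [jt Pjm]] nP]; exists j; split => //.
  move: jt; rewrite leq_eqVlt => /orP [/eqP jt|]; last by rewrite ltnS.
  by rewrite jt in Pjm.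
by exists j; split => //; exact: leqW.
Qed.

Section ML.
Variable X : set betaomega.
Hypothesis hw : forall n, X (pt n).
Local Notation XT := (set_type X).
Hypothesis hCL : pseudocompact (CL XT).
Variables (g : nat -> nat -> nat) (w : set_system nat).
Hypotheses (UFw : UltraFilter w) (evw : forall T, w [set n | (T <= n)%N])
  (g0 : forall n, g 0%N n = n).

Definition isC j := exists c, w [set n | g j n = c].
Definition cval j : nat :=
  if pselect (isC j) is left H then projT1 (cid H) else 0%N.
Lemma cvalP j : isC j -> w [set n | g j n = cval j].
Proof.
rewrite /cval; case: pselect => // H _; exact: (projT2 (cid H)).
Qed.

Definition eqw j k := w [set n | g j n = g k n].
Lemma eqw_refl j : eqw j j.
Proof. by apply: filterS filterT. Qed.
Lemma rep_ex j : exists k, `[< eqw j k >]. Proof. by exists j; apply/asboolP; exact: eqw_refl. Qed.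
Definition rep j := ex_minn (rep_ex j).
Lemma rep_spec j : eqw j (rep j) /\ (rep j <= j)%N /\ forall k, eqw j k -> (rep j <= k)%N.
Proof.
rewrite /rep; case: ex_minnP => m /asboolP Hm Hmin; split => //; split.
  by apply: Hmin; apply/asboolP; exact: eqw_refl.
by move=> k Hk; apply: Hmin; apply/asboolP.
Qed.

Lemma eqw_trans j k l : eqw j k -> eqw k l -> eqw j l.
Proof.
move=> h1 h2; have h : w ([set n | g j n = g k n] `&` [set n | g k n = g l n]) by apply: filterI.
by apply: filterS h => n [e1 e2]; rewrite /= e1 e2.
Qed.

Lemma rep_rep j : rep (rep j) = rep j.
Proof.
have [e1 [l1 m1]] := rep_spec j; have [e2 [l2 m2]] := rep_spec (rep j).
apply/eqP; rewrite eqn_leq l2 /=; apply: m1; exact: eqw_trans e1 e2.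
Qed.

Definition isR j := ~ isC j /\ rep j = j.

Lemma isR_rep j : ~ isC j -> isR (rep j).
Proof.
move=> nC; split; last exact: rep_rep.
move=> [c Hc]; apply: nC; exists c; have [e1 _] := rep_spec j.
have h : w ([set n | g j n = g (rep j) n] `&` [set n | g (rep j) n = c]) by apply: filterI.
by apply: filterS h => n [f1 f2]; rewrite /= f1 f2.
Qed.

Lemma isR0 : isR 0%N.
Proof.
split; last by have [_ [+ _]] := rep_spec 0%N; rewrite leqn0 => /eqP.
move=> [c Hc]; have h : w ([set n | g 0%N n = c] `&` [set n | (c.+1 <= n)%N]) by apply: filterI.
have [n [e]] := filter_ex h; rewrite /= g0 in e; rewrite /= e ltnn //.
Qed.

Lemma R_neq j k : isR j -> isR k -> j <> k -> w [set n | g j n <> g k n].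
Proof.
move=> [_ rj] [_ rk] jk.
case: (in_ultra_setVsetC [set n | g j n = g k n] UFw) => [H|H]; last first.
  by apply: filterS H => n /= h /h.
exfalso; have [jk'|kj] := ltnP j k.
  have [_ [_ m]] := rep_spec k; have := m j.
  have e : eqw k j by apply: filterS H => n /= ->.
  by move=> /(_ e); rewrite rk leqNgt jk'.
have [_ [_ m]] := rep_spec j; have := m k H; rewrite rj => kj'.
by apply: jk; apply/eqP; rewrite eqn_leq kj kj'.
Qed.

Lemma R_avoid j m : isR j -> w [set n | g j n <> m].
Proof.
move=> [nC _].
case: (in_ultra_setVsetC [set n | g j n = m] UFw) => [H|H]; last first.
  by apply: filterS H => n /= h /h.
by exfalso; apply: nC; exists m.
Qed.

Definition good (prev : seq nat) (n : nat) := let t := size prev in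
  [/\ (t <= n)%N,
      forall j, (j <= t)%N -> isC j -> g j n = cval j,
      forall j, (j <= t)%N -> ~ isC j -> g j n = g (rep j) n,
      forall j k, (j <= t)%N -> (k <= t)%N -> isR j -> isR k -> j <> k -> g j n <> g k n &
      forall j s k, (j <= t)%N -> (s <= t)%N -> (k <= t)%N -> (s < t)%N -> (k <= s)%N ->
        isR j -> isR k -> g j n <> g k (nth 0%N prev s)].

Lemma good_ex prev : exists n, good prev n.
Proof.
set t := size prev.
have h1 := evw t.
have h2 : w [set n | forall j, (j <= t)%N -> isC j -> g j n = cval j].
  apply: filter_bnd => j _; apply: filter_imp; exact: cvalP.
have h3 : w [set n | forall j, (j <= t)%N -> ~ isC j -> g j n = g (rep j) n].
  apply: filter_bnd => j _; apply: filter_imp => _; exact: (proj1 (rep_spec j)).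
have h4 : w [set n | forall j, (j <= t)%N -> forall k, (k <= t)%N -> isR j -> isR k -> j <> k -> g j n <> g k n].
  apply: filter_bnd => j _; apply: filter_bnd => k _.
  apply: filter_imp => Rj; apply: filter_imp => Rk; apply: filter_imp => jk; exact: R_neq.
have h5 : w [set n | forall j, (j <= t)%N -> forall s, (s <= t)%N -> forall k, (k <= t)%N ->
     (s < t)%N -> (k <= s)%N -> isR j -> isR k -> g j n <> g k (nth 0%N prev s)].
  apply: filter_bnd => j _; apply: filter_bnd => s _; apply: filter_bnd => k _.
  do 2 apply: filter_imp => _; apply: filter_imp => Rj; apply: filter_imp => _; exact: R_avoid.
have h : w ([set n | (t <= n)%N] `&` ([set n | forall j, (j <= t)%N -> isC j -> g j n = cval j] `&`
   ([set n | forall j, (j <= t)%N -> ~ isC j -> g j n = g (rep j) n] `&`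
   ([set n | forall j, (j <= t)%N -> forall k, (k <= t)%N -> isR j -> isR k -> j <> k -> g j n <> g k n] `&`
   [set n | forall j, (j <= t)%N -> forall s, (s <= t)%N -> forall k, (k <= t)%N ->
     (s < t)%N -> (k <= s)%N -> isR j -> isR k -> g j n <> g k (nth 0%N prev s)])))).
  by do 4 (apply: filterI => //).
have [n [a [b [c [d e]]]]] := filter_ex h.
exists n; split => //.
- by move=> j k jt kt; apply: d.
- by move=> j s k jt st kt; apply: e.
Qed.

Definition step prev := projT1 (cid (good_ex prev)).
Lemma stepP prev : good prev (step prev).
Proof. exact: (projT2 (cid (good_ex prev))). Qed.

Fixpoint pref (t : nat) : seq nat :=
  if t is t'.+1 then rcons (pref t') (step (pref t')) else [::].
Definition nt t := step (pref t).

Lemma size_pref t : size (pref t) = t.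
Proof. by elim: t => //= t IH; rewrite size_rcons IH. Qed.

Lemma nth_pref t s : (s < t)%N -> nth 0%N (pref t) s = nt s.
Proof.
elim: t => // t IH; rewrite ltnS leq_eqVlt => /orP [/eqP ->|st] /=.
  by rewrite nth_rcons size_pref ltnn eqxx.
by rewrite nth_rcons size_pref st IH.
Qed.

Lemma ntP t : good (pref t) (nt t).
Proof. exact: stepP. Qed.

Lemma nt_ge t : (t <= nt t)%N.
Proof. by have [+ _ _ _ _] := ntP t; rewrite size_pref. Qed.

Lemma ntC j t : (j <= t)%N -> isC j -> g j (nt t) = cval j.
Proof. by have [_ + _ _ _] := ntP t; rewrite size_pref; apply. Qed.

Lemma ntE j t : (j <= t)%N -> ~ isC j -> g j (nt t) = g (rep j) (nt t).
Proof. by have [_ _ + _ _] := ntP t; rewrite size_pref; apply. Qed.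

Lemma KD j k t s : isR j -> isR k -> (j <= t)%N -> (k <= s)%N ->
  g j (nt t) = g k (nt s) -> j = k.
Proof.
move=> Rj Rk jt ks e; apply: contrapT => jk.
have [ts|st|ts] := ltngtP t s.
- have [_ _ _ _ h] := ntP s; rewrite size_pref in h.
  apply: (h k t j) => //; [exact: ltnW|exact: leq_trans jt (ltnW ts)|by rewrite nth_pref].
- have [_ _ _ _ h] := ntP t; rewrite size_pref in h.
  apply: (h j s k) => //; [exact: ltnW|exact: leq_trans ks (ltnW st)|by rewrite nth_pref].
- subst s; have [_ _ _ h _] := ntP t; rewrite size_pref in h.
  by apply: (h j k).
Qed.

Lemma nt_inj t s : nt t = nt s -> t = s.
Proof.
move=> e; apply: contrapT => ts.
have [lt|gt|//] := ltngtP t s.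
- have [_ _ _ _ h] := ntP s; rewrite size_pref in h.
  by apply: (h 0%N t 0%N) => //; [exact: ltnW|exact: isR0|exact: isR0|rewrite nth_pref // !g0].
- have [_ _ _ _ h] := ntP t; rewrite size_pref in h.
  by apply: (h 0%N s 0%N) => //; [exact: ltnW|exact: isR0|exact: isR0|rewrite nth_pref // !g0].
Qed.


Local Notation OB := (@OB X).

Definition S t : set nat := [set m | exists j, (j <= t)%N /\ isR j /\ m = g j (nt t)].

Lemma ptX_S t j : (j <= t)%N -> isR j -> OB (S t) (ptX hw (g j (nt t))).
Proof. by move=> jt Rj; apply/ptX_OB; exists j. Qed.

Lemma ET_ne t : OB (S t) !=set0.
Proof. by exists (ptX hw (nt t)); rewrite -{1}(g0 (nt t)); apply: ptX_S => //; exact: isR0. Qed.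

Definition ET t : CL XT := exist _ (OB (S t)) (conj (@OB_closed X (S t)) (ET_ne t)).

Lemma OB1' (x : XT) m : OB [set m] x -> x = ptX hw m.
Proof. exact: OB1. Qed.

Lemma OB_S t x : OB (S t) x -> exists j, (j <= t)%N /\ isR j /\ x = ptX hw (g j (nt t)).
Proof.
move=> xS; have UF : UltraFilter (sval (sval x)) := svalP (sval x).
have [j [jt Pj]] := @ultra_bnd _ UF t (fun j => [set m | isR j /\ m = g j (nt t)]) xS.
have [m [Rj _]] := filter_ex Pj.
exists j; split => //; split => //; apply: OB1'.
by apply: filterS Pj => k [_ ->].
Qed.

Lemma ptX_inj a b : ptX hw a = ptX hw b -> a = b.
Proof.
move=> e; have : OB [set a] (ptX hw a) by apply/ptX_OB.
by rewrite e => /ptX_OB.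
Qed.

Lemma iso t : nbhs (ET t) [set F | F = ET t].
Proof.
have h1 := @plus_nbhs X (ET t) _ (@OB_open X (S t)) (@subset_refl _ _).
have h2 : nbhs (ET t) [set F : CL XT | forall j, (j <= t)%N -> isR j ->
    sval F `&` OB [set g j (nt t)] !=set0].
  apply: filter_bnd => j jt; apply: filter_imp => Rj; apply: minus_nbhs; first exact: (@OB_open X).
  by exists (ptX hw (g j (nt t))); split; [exact: ptX_S|exact/ptX_OB].
have h : nbhs (ET t) ([set F : CL XT | sval F `<=` OB (S t)] `&` [set F : CL XT | forall j, (j <= t)%N -> isR j ->
    sval F `&` OB [set g j (nt t)] !=set0]) by apply: filterI.
apply: filterS h => F [FS Fm]; apply: sig_eq => /=.
apply/seteqP; split => // x /OB_S [j [jt [Rj ->]]].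
have [y [Fy /OB1' ey]] := Fm j jt Rj; by rewrite -ey.
Qed.

Lemma excl (A : CL XT) t : A <> ET t -> nbhs A [set F | F <> ET t].
Proof.
move=> At.
case: (pselect (exists x, sval A x /\ ~ OB (S t) x)) => [[x [Ax nx]]|H].
  have h : nbhs A [set F : CL XT | sval F `&` OB (~` S t) !=set0].
    apply: minus_nbhs; first exact: (@OB_open X).
    by exists x; split => //; rewrite -OB_C.
  apply: filterS h => F [z [Fz]]; rewrite -OB_C => nz FE; apply: nz.
  by rewrite FE in Fz.
have AS : sval A `<=` OB (S t).
  by move=> x Ax; apply: contrapT => nx; apply: H; exists x.
have [y [Sy nAy]] : exists y, OB (S t) y /\ ~ sval A y.
  apply: contrapT => nE; apply: At; apply: sig_eq => /=.
  apply/seteqP; split => // y Sy; apply: contrapT => nAy; apply: nE; by exists y.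
have [j [jt [Rj ey]]] := OB_S Sy.
have h : nbhs A [set F : CL XT | sval F `<=` OB (~` [set g j (nt t)])].
  apply: plus_nbhs; first exact: (@OB_open X).
  move=> x Ax; rewrite -OB_C => /OB1' ex; apply: nAy; by rewrite ey -ex.
apply: filterS h => F FS FE; rewrite FE /= in FS.
have := FS _ Sy; rewrite -OB_C; apply; rewrite ey; exact/ptX_OB.
Qed.

Lemma ET_inj t s : ET t = ET s -> t = s.
Proof.
move=> e; have : sval (ET s) (ptX hw (nt t)).
  rewrite -e /=; rewrite -{1}(g0 (nt t)); apply: ptX_S => //; exact: isR0.
move=> /OB_S [k [ks [Rk /ptX_inj ek]]].
have k0 : 0%N = k by apply: (@KD 0%N k t s isR0 Rk) => //; rewrite g0.
rewrite -k0 g0 in ek; exact: nt_inj.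
Qed.


Local Open Scope ring_scope.
Import Order.TTheory GRing.Theory Num.Theory.

Definition fET (F : CL XT) : Rdefinitions.R :=
  if pselect (exists t, F = ET t) is left H then (projT1 (cid H))%:R else 0.

Lemma fET_ET t : fET (ET t) = t%:R.
Proof.
rewrite /fET; case: pselect => [H|H]; last by exfalso; apply: H; exists t.
by have := projT2 (cid H) => /ET_inj <-.
Qed.

Lemma PC : exists A : CL XT, forall N, nbhs A N -> forall T, exists t, (T <= t)%N /\ N (ET t).
Proof.
apply: contrapT => H.
have key : forall A : CL XT, exists N T, nbhs A N /\ forall t, (T <= t)%N -> ~ N (ET t).
  move=> A; apply: contrapT => nk; apply: H; exists A => N nN T.
  apply: contrapT => ne; apply: nk; exists N, T; split => // t Tt NE; apply: ne; exists t.
  by split.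
have cf : continuous fET.
  move=> A; suff loc : nbhs A [set F | fET F = fET A].
    move=> U /= hU; apply: filterS loc => F /= ->; exact: nbhs_singleton hU.
  case: (pselect (exists s, A = ET s)) => [[s ->]|nA].
    by apply: filterS (iso s) => F ->.
  have [N [T [nN hN]]] := key A.
  have h2 : nbhs A [set F | forall t, (t <= T)%N -> F <> ET t].
    apply: filter_bnd => t _; apply: excl => e; apply: nA; by exists t.
  have h : nbhs A (N `&` [set F | forall t, (t <= T)%N -> F <> ET t]) by apply: filterI.
  apply: filterS h => F [NF hF].
  have fA : fET A = 0.
    rewrite /fET; destruct (pselect _) as [H'|H']; last done.
    by exfalso; have [t Ht] := H'; apply: nA; exists t.
  rewrite /= fA /fET.
  destruct (pselect (exists t, F = ET t)) as [H'|H']; last done.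
  have [t Ht] := H'.
  exfalso; have [tT|Tt] := leqP t T; first exact: hF t tT Ht.
  by apply: (hN t (ltnW Tt)); rewrite -Ht.
have [M hM] := hCL cf.
have M0 : 0 <= M by apply: le_trans (hM (ET 0%N)).
have := hM (ET (Num.bound M)); rewrite fET_ET ger0_norm // leNgt.
by rewrite archi_boundP.
Qed.

Definition V j : set nat := [set m | exists s, (j <= s)%N /\ m = g j (nt s)].

Lemma In_le_sum (J : list nat) j : List.In j J -> (j <= foldr addn 0 J)%N.
Proof.
elim: J => //= a J IH [<-|/IH h]; first exact: leq_addr.
exact: leq_trans h (leq_addl _ _).
Qed.

Lemma ML_main : exists y : nat -> XT, forall (J : list nat) (W : nat -> set XT),
  (forall j, List.In j J -> nbhs (y j) (W j)) ->
  forall T, exists n, (T <= n)%N /\ forall j, List.In j J -> W j (ptX hw (g j n)).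
Proof.
have [A HA] := PC.
have yR : forall j, isR j -> exists x, sval A x /\ OB (V j) x.
  move=> j Rj; apply: contrapT => nx.
  have sub : sval A `<=` OB (~` V j).
    move=> x Ax; rewrite -OB_C => Vx; apply: nx; by exists x.
  have [t [jt Et]] := HA _ (plus_nbhs (@OB_open X _) sub) j.
  have := Et _ (ptX_S jt Rj); rewrite -OB_C; apply; apply/ptX_OB.
  by exists t.
pose yc j := if pselect (isR j) is left H then projT1 (cid (yR j H)) else ptX hw 0%N.
have ycP : forall j, isR j -> sval A (yc j) /\ OB (V j) (yc j).
  move=> j Rj; rewrite /yc; destruct (pselect (isR j)) as [H|H]; last by [].
  exact: (projT2 (cid (yR j H))).
pose y j := if pselect (isC j) then ptX hw (cval j) else yc (rep j).
exists y => J W hW T.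
pose P j := [set F : CL XT | ~ isC j -> sval F `&` ((W j)° `&` OB (V (rep j))) !=set0].
have hP : nbhs A [set F | forall j, List.In j J -> P j F].
  apply: filter_list => j jJ; apply: filter_imp => nC.
  apply: minus_nbhs; first by apply: openI; [exact: open_interior|exact: OB_open].
  have [yA yV] := ycP _ (isR_rep nC).
  exists (yc (rep j)); split => //; split => //.
  have := hW j jJ; rewrite /y; destruct (pselect (isC j)) as [Cj|nC']; first by case: nC.
  by move=> /= h.
have [t [Tt Pt]] := HA _ hP (T + foldr addn 0 J)%N.
exists (nt t); split.
  by apply: leq_trans (nt_ge t); apply: leq_trans Tt; exact: leq_addr.
move=> j jJ.
have jt : (j <= t)%N.
  by apply: leq_trans (In_le_sum jJ) _; apply: leq_trans Tt; exact: leq_addl.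
case: (pselect (isC j)) => [Cj|nC].
  rewrite ntC //; have := hW j jJ; rewrite /y; destruct (pselect (isC j)) as [Cj'|nC']; last by case: nC'.
  exact: nbhs_singleton.
have [x [Ex [Wx Vx]]] := Pt j jJ nC.
have [k [kt [Rk ex]]] := OB_S Ex.
have Rr := isR_rep nC.
move: Vx; rewrite ex => /ptX_OB [s [rs es]].
have kr := KD Rk Rr kt rs es.
rewrite ntE // -kr -ex; exact: interior_subset.
Qed.
End ML.

Lemma PN_list (Y : topologicalType) (K : Type) (x : K -> Y)
  (L : seq (set (K -> Y))) :
  (forall S, S \in L -> exists c U, open U /\ S = (fun f => f c) @^-1` U) ->
  (forall S, S \in L -> S x) ->
  exists (s : list K) (Vs : K -> set Y),
    (forall c, nbhs (x c) (Vs c)) /\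
    (forall z, (forall c, List.In c s -> Vs c (z c)) -> forall S, S \in L -> S z).
Proof.
elim: L => [|S L IH] H1 H2.
  by exists nil, (fun _ => setT); split => // c; exact: filterT.
have [s [Vs [hV hz]]] : exists (s : list K) (Vs : K -> set Y),
    (forall c, nbhs (x c) (Vs c)) /\
    (forall z, (forall c, List.In c s -> Vs c (z c)) -> forall S, S \in L -> S z).
  by apply: IH => S' h; [apply: H1|apply: H2]; rewrite in_cons h orbT.
have [c [U [oU eS]]] := H1 S (mem_head _ _).
have xU : U (x c) by have := H2 S (mem_head _ _); rewrite eS.
exists (c :: s), (fun d => if pselect (d = c) then Vs d `&` U else Vs d); split.
  move=> d; case: pselect => [e|_] //; apply: filterI => //.
  rewrite e; exact: open_nbhs_nbhs.
move=> z hz' S'; rewrite in_cons => /orP [/eqP ->|SL].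
  have := hz' c (or_introl erefl); case: pselect => // _ [_ Uz]; by rewrite eS.
apply: hz => // d ds; have := hz' d (or_intror ds); by case: pselect => // _ [].
Qed.

Lemma PN (Y : topologicalType) (K : Type) (x : power Y K) (N : set (power Y K)) :
  nbhs x N -> exists (s : list K) (Vs : K -> set Y),
    (forall c, nbhs (x c) (Vs c)) /\
    (forall z : power Y K, (forall c, List.In c s -> Vs c (z c)) -> N z).
Proof.
move=> [B [oB Bx] BN].
move: oB => [D' sD' eB].
rewrite -eB in Bx BN.
case: Bx => i Di ix.
have [E sE eE] := sD' _ Di.
have [s [Vs [hV hz]]] : exists (s : list K) (Vs : K -> set Y),
    (forall c, nbhs (x c) (Vs c)) /\
    (forall z, (forall c, List.In c s -> Vs c (z c)) -> forall S, S \in enum_fset E -> S z).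
  apply: PN_list.
  - move=> S SE; have := sE S SE; move=> /set_mem [c _ [U oU eU]]; exists c, U; split => //.
  - by move=> S SE; move: ix; rewrite -eE; apply.
exists s, Vs; split => // z zs.
have iz : (\bigcap_(S in [set` E]) S) z by move=> S SE; exact: hz.
apply: BN; exists i => //; rewrite -eE; exact: iz.
Qed.

Import Order.TTheory GRing.Theory Num.Theory.

Lemma ML (X : set betaomega) (hw : forall n, X (pt n))
  (hCL : pseudocompact (CL (set_type X))) (g : nat -> nat -> nat)
  (g0 : forall n, g 0%N n = n) :
  exists y : nat -> set_type X, forall (J : list nat) (W : nat -> set (set_type X)),
  (forall j, List.In j J -> nbhs (y j) (W j)) ->
  forall T, exists n, (T <= n)%N /\ forall j, List.In j J -> W j (ptX hw (g j n)).
Proof.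
have [w [UFw sw]] := @ultraFilterLemma nat eventually _.
apply: (@ML_main X hw hCL g w UFw) => // T.
by apply: sw; exists T.
Qed.

Local Open Scope ring_scope.

Lemma cont_nbhs (K : topologicalType) (f : K -> Rdefinitions.R) (x : K) :
  continuous f -> forall e : Rdefinitions.R, 0 < e ->
  nbhs x [set z | `|f x - f z| < e].
Proof.
move=> cf e e0; have := cf x (ball (f x) e) (nbhsx_ballx _ _ e0).
move=> h; have h2 : nbhs x (f @^-1` ball (f x) e) := h.
by apply: filterS h2 => z; rewrite /ball /=.
Qed.

Unset Implicit Arguments.

Theorem corollary4p2 (X : set betaomega) :
  (forall (p : betaomega) (n : nat), is_principal_at p n -> X p) ->
  pseudocompact (CL (set_type X)) ->
  forall kappa : Type, pseudocompact (power (set_type X) kappa).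
Proof.
move=> hX hCL K f cf.
have hw : forall n, X (pt n).
  by move=> n; apply: (hX _ n) => A; exact: principal_filterP.
apply: contrapT => nb.
have unb : forall n : nat, exists x, n%:R < `|f x|.
  move=> n; apply: contrapT => h; apply: nb; exists n%:R => x.
  rewrite leNgt; apply/negP => hx; apply: h; by exists x.
have hN : forall n : nat, exists p : (list K * (K -> nat)),
    forall z : power (set_type X) K,
    (forall c, List.In c p.1 -> z c = ptX hw (p.2 c)) -> n%:R < `|f z|.
  move=> n; have [x hx] := unb n.
  have nx : nbhs x [set z | `|f x - f z| < `|f x| - n%:R].
    by apply: cont_nbhs => //; rewrite subr_gt0.
  have [s [Vs [hV hz]]] := PN nx.
  have [m hm] := choice (fun c => nbhs_ptX hw (hV c)).
  exists (s, m) => z /= zs.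
  have := hz z (fun c cs => eq_ind_r _ (hm c) (zs c cs)) => /= h1.
  have h2 := ler_normD (f x - f z) (f z).
  rewrite subrK in h2.
  have h3 := ler_norm (f x - f z).
  lra.
have [F hF] := choice hN.
pose code (n : nat) (c : K) : nat :=
  if pselect (List.In c (F n).1) then (F n).2 c else 0%N.
pose zn (n : nat) : power (set_type X) K := fun c => ptX hw (code n c).
have hzn : forall n : nat, n%:R < `|f (zn n)|.
  move=> n; apply: hF => c cs; rewrite /zn /code; case: pselect => //.
pose cidx (j : nat) : option K :=
  match (@choice.unpickle (nat * nat)%type j) with
  | Some (n, k) => List.nth_error (F n).1 k
  | None => None end.
pose h (j : nat) (m : nat) : nat :=
  if j is j'.+1 then (if cidx j' is Some c then code m c else 0%N) else m.
have [y' hy'] := @ML X hw hCL h (fun n => erefl).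
pose used c := exists j, cidx j = Some c.
pose jof c := if pselect (used c) is left H then projT1 (cid H) else 0%N.
have jofP : forall c, used c -> cidx (jof c) = Some c.
  move=> c uc; rewrite /jof; destruct (pselect (used c)) as [H|H]; last by [].
  exact: (projT2 (cid H)).
pose y : power (set_type X) K := fun c => if pselect (used c) then y' (jof c).+1 else ptX hw 0%N.
have ny := cont_nbhs y cf (@ltr01 _).
have [s [Vs [hV hz]]] := PN ny.
pose J := List.map (fun c => (jof c).+1) s.
pose W (j : nat) : set (set_type X) :=
  [set a | forall c, List.In c s -> used c -> (jof c).+1 = j -> Vs c a].
have hW : forall j, List.In j J -> nbhs (y' j) (W j).
  move=> j _; apply: filter_list => c cs; apply: filter_imp => uc; apply: filter_imp => <-.
  have := hV c; rewrite /y; case: pselect => //.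
pose T := Num.bound (`|f y| + 2).
have [n [Tn hn]] := hy' J W hW T.
have hzs : forall c, List.In c s -> Vs c (zn n c).
  move=> c cs; case: (pselect (used c)) => [uc|nuc].
    have := hn (jof c).+1 (List.in_map _ _ _ cs) c cs uc erefl.
    by rewrite /h jofP.
  have -> : zn n c = y c.
    rewrite /y; destruct (pselect (used c)) as [uc|nuc']; first by case: nuc.
    rewrite /zn /code; destruct (pselect (List.In c (F n).1)) as [cF|ncF]; last by [].
    exfalso; apply: nuc; have [k hk] := List.In_nth_error _ _ cF.
    by exists (choice.pickle (n, k)); rewrite /cidx choice.pickleK.
  exact: nbhs_singleton (hV c).
have h1 := hz _ hzs.
have h2 := hzn n.
have h3 : `|f y| + 2 < T%:R by apply: archi_boundP; apply: addr_ge0.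
have h4 : (T%:R : Rdefinitions.R) <= n%:R by rewrite ler_nat.
have h5 := ler_normD (f (zn n) - f y) (f y).
rewrite subrK in h5.
have h6 : `|f (zn n) - f y| = `|f y - f (zn n)| by rewrite distrC.
simpl in h1.
lra.
Qed.
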